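(* Fix $k\in\mathbb{Z}_{\ge0}$ and $m\in\mathbb{Z}_{\ge0}$, let $S\subseteq(m,m+1)$, and let $r$ be a strongly rigid $S$-semi-metric on $\Omega$. Then: (1) $\Lambda^k_m[r](x,y)\in(\lambda^k_{\mu_m},\,2\lambda^k_{\mu_m})$ for all distinct $x,y\in\Omega$; (2) $\Lambda^k_m[r]$ is a metric on $\Omega$ and $\Lambda^k_m[r]\in\mathrm{Met}(\Omega)$; (3) the metric $\Lambda^k_m[r]$ is strongly rigid.
   Context: Fix a bijection $Q\colon\mathbb{Z}_{\ge0}\to\mathbb{Q}_{\ge0}$ with property (M): setting $\mu_m=\min Q^{-1}([m,m+1)\cap\mathbb{Q})$, we have $Q(\mu_m)=m$ and $\mu_m<\mu_{m+1}$ for all $m\in\mathbb{Z}_{\ge0}$. For a summable sequence $\alpha=(a_i)$ of positive reals and $B\subseteq\mathbb{Q}_{\ge0}$, $\langle\alpha,B\rangle=\sum_{i:\,Q(i)\in B}a_i$ ($=0$ if $B=\emptyset$). For $k\in\mathbb{Z}_{\ge0}$ let $F_k(n)=2^n+k$ and $\lambda^k=(\lambda^k_i)_{i\ge0}$ with $\lambda^k_i=2^{-F_k(i)}$. $\Omega$ is a discrete space of cardinality $\mathfrak{c}$. For $S\subseteq[0,\infty)$, an $S$-semi-metric on a set $Y$ is a map $r\colon Y\times Y\to[0,\infty)$ with $r(x,y)=r(y,x)$, $r(x,y)=0$ iff $x=y$, and $r(x,y)\in S$ for $x\neq y$ (no triangle inequality assumed); it (or a metric) is strongly rigid if $r(x,y)=r(u,v)\neq0$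 implies $\{x,y\}=\{u,v\}$. For $m\in\mathbb{Z}_{\ge0}$ and a semi-metric $r$ on $\Omega$ put $J(m,r(x,y))=[m,r(x,y))\cap\mathbb{Q}$ and $\Lambda^k_m[r](x,y)=\langle\lambda^k,J(m,r(x,y))\rangle$. $\mathrm{Met}(\Omega)$ is the set of metrics on $\Omega$ generating its (discrete) topology. *)

(* Defs.v *)
From HB Require Import structures.
From mathcomp Require Import all_boot all_order all_algebra.
From mathcomp Require Import all_classical all_reals all_analysis.
Set Implicit Arguments. Unset Strict Implicit. Unset Printing Implicit Defensive.
Import Order.TTheory GRing.Theory Num.Theory.
Local Open Scope classical_set_scope.
Local Open Scope ring_scope.

Definition enum_Qnonneg (Q : nat -> rat) : Prop :=
  injective Q /\ (forall q : rat, 0 <= q <-> exists i, Q i = q).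

Definition is_mu (Q : nat -> rat) (mu : nat -> nat) : Prop :=
  forall m : nat,
    ((m%:R <= Q (mu m)) && (Q (mu m) < m.+1%:R)) /\
    (forall i : nat, (m%:R <= Q i) && (Q i < m.+1%:R) -> (mu m <= i)%N).

Definition propM (Q : nat -> rat) (mu : nat -> nat) : Prop :=
  forall m : nat, Q (mu m) = m%:R /\ (mu m < mu m.+1)%N.

Definition pairing {R : realType} (Q : nat -> rat) (a : nat -> R) (B : set rat) : R :=
  limn (fun n => \sum_(i < n | Q i \in B) a i).

Definition Fk (k n : nat) : nat := (2 ^ n + k)%N.
Definition lambda {R : realType} (k : nat) (i : nat) : R := 2 ^- Fk k i.

Definition J {R : realType} (m : nat) (t : R) : set rat :=
  [set q : rat | (m%:R <= q) && (ratr q < t)].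

Definition Lambda {R : realType} {T : Type} (Q : nat -> rat) (k m : nat)
  (r : T -> T -> R) (x y : T) : R :=
  pairing Q (lambda k) (J m (r x y)).

Definition semi_metric {R : realType} {T : Type} (S : set R) (r : T -> T -> R) : Prop :=
  (forall x y, 0 <= r x y) /\
  (forall x y, r x y = r y x) /\
  (forall x y, r x y = 0 <-> x = y) /\
  (forall x y, x <> y -> S (r x y)).

Definition is_metric {R : realType} {T : Type} (d : T -> T -> R) : Prop :=
  (forall x y, 0 <= d x y) /\
  (forall x y, d x y = d y x) /\
  (forall x y, d x y = 0 <-> x = y) /\
  (forall x y z, d x z <= d x y + d y z).

Definition strongly_rigid {R : realType} {T : Type} (r : T -> T -> R) : Prop :=
  forall x y u v, r x y = r u v -> r x y <> 0 ->
    (x = u /\ y = v) \/ (x = v /\ y = u).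

(* Met(Omega) for discrete Omega: metrics whose metric topology is discrete,
   i.e. every singleton is open (every point is isolated). *)
Definition Met {R : realType} (T : Type) (d : T -> T -> R) : Prop :=
  is_metric d /\
  (forall A : set T, forall x, A x ->
     exists2 e : R, 0 < e & forall y, d x y < e -> A y).

(* Main.v *)
Require Import Defs.
From HB Require Import structures.
From mathcomp Require Import all_boot all_order all_algebra.
From mathcomp Require Import all_classical all_reals all_analysis.
From mathcomp Require Import zify ring lra.
Import Order.TTheory GRing.Theory Num.Theory.
Local Open Scope classical_set_scope.
Local Open Scope ring_scope.

Section Aux.
Variable R : realType.

Lemma pinv_le (m n : nat) : (m <= n)%N -> (2:R) ^- n <= 2 ^- m.
Proof.
move=> mn; rewrite lef_pV2 ?posrE ?exprn_gt0 //.
by rewrite ler_eXn2l // ltr1n.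
Qed.

Lemma pinv_add (m n : nat) : (2:R) ^- (m + n) * 2 ^+ n = 2 ^- m.
Proof.
by rewrite exprD invfM -mulrA mulVf ?mulr1 // expf_neq0.
Qed.

Lemma lam_gt0 k i : 0 < @lambda R k i.
Proof. by rewrite /lambda invr_gt0 exprn_gt0. Qed.

Lemma lam_ratio k i : (0 < i)%N -> 4 * @lambda R k i.+1 <= lambda k i.
Proof.
move=> i0; rewrite /lambda.
have h : (Fk k i + 2 <= Fk k i.+1)%N.
  rewrite /Fk expnS; have : (1 < 2 ^ i)%N by rewrite -{1}(expn0 2) ltn_exp2l.
  lia.
rewrite -(pinv_add (Fk k i) 2) mulrC.
apply: ler_pM; [by rewrite ?invr_ge0 ?exprn_ge0|by []|exact: pinv_le|].
rewrite expr2; lra.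
Qed.

Lemma lam_ratio2 k i : 2 * @lambda R k i.+1 <= lambda k i.
Proof.
rewrite /lambda.
have h : (Fk k i + 1 <= Fk k i.+1)%N.
  rewrite /Fk expnS; have : (0 < 2 ^ i)%N by rewrite expn_gt0.
  lia.
rewrite -(pinv_add (Fk k i) 1) mulrC.
apply: ler_pM; [by rewrite ?invr_ge0 ?exprn_ge0|by []|exact: pinv_le|].
by rewrite expr1.
Qed.
End Aux.

Section Sums.
Variable R : realType.
Variable Q : nat -> rat.
Variable k : nat.
Local Notation a := (@lambda R k).

Lemma tail s d : (0 < s)%N ->
  3 * \sum_(s <= i < s + d) a i + 4 * a (s + d) <= 4 * a s.
Proof.
move=> s0; elim: d => [|d IH].
  by rewrite addn0 big_geq // mulr0 add0r.
rewrite !addnS big_nat_recr /=; last by rewrite leq_addr.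
have h := @lam_ratio R k (s + d) (leq_trans s0 (leq_addr _ _)).
lra.
Qed.

Lemma tail_le s n : (0 < s)%N -> 3 * \sum_(s <= i < n) a i <= 4 * a s.
Proof.
move=> s0; case: (leqP n s) => hn.
  by rewrite big_geq // mulr0 mulr_ge0 // ltW // lam_gt0.
rewrite -(subnKC (ltnW hn)).
have := tail s (n - s) s0; have := lam_gt0 R k (s + (n - s)); lra.
Qed.

Lemma head_le j n : 3 * \sum_(j <= i < n) a i <= 5 * a j.
Proof.
case: (ltnP j n) => hn.
  rewrite big_ltn //.
  have := tail_le j.+1 n (ltn0Sn j); have := lam_ratio2 R k j; lra.
by rewrite big_geq // mulr0 mulr_ge0 // ltW // lam_gt0.
Qed.

Definition P (B : set rat) n := \sum_(i < n | Q i \in B) a i.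

Lemma P_ge0 B n : 0 <= P B n.
Proof. by apply: sumr_ge0 => i _; exact/ltW/lam_gt0. Qed.

Lemma P_le_sum B j n : (forall i, Q i \in B -> (j <= i)%N) ->
  P B n <= \sum_(j <= i < n) a i.
Proof.
move=> hB; rewrite big_geq_mkord /P !big_mkcond /= [X in _ <= X]big_mkcond /=.
apply: ler_sum => i _.
case h: (Q i \in B); last by case: ifP => // _; exact/ltW/lam_gt0.
by rewrite (hB _ h).
Qed.

Lemma P_nondec B : nondecreasing_seq (P B).
Proof.
apply/nondecreasing_seqP => n; rewrite /P [in X in _ <= X]big_mkcond big_ord_recr /=.
rewrite -big_mkcond /= lerDl; case: ifP => // _; exact/ltW/lam_gt0.
Qed.

Lemma P_ub B n : 3 * P B n <= 5 * a 0.
Proof.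
have h := @P_le_sum B 0 n (fun i _ => leq0n i).
have := head_le 0 n; lra.
Qed.

Lemma P_cvg B : cvgn (P B).
Proof.
apply: nondecreasing_is_cvgn; first exact: P_nondec.
exists (5 * a 0 / 3) => _ [n _ <-]; have := P_ub B n; lra.
Qed.

Lemma lim_ge B n : P B n <= limn (P B).
Proof. exact: (nondecreasing_cvgn_le (P_nondec B) (P_cvg B)). Qed.

Lemma lim_le B c : (forall n, P B n <= c) -> limn (P B) <= c.
Proof. by move=> h; apply: limr_le; [exact: P_cvg|exact: nearW]. Qed.

Lemma P_extra B1 B2 i2 n : (forall i, Q i \in B1 -> Q i \in B2) ->
  Q i2 \in B2 -> Q i2 \notin B1 -> (i2 < n)%N -> P B1 n + a i2 <= P B2 n.
Proof.
move=> h12 h2 h1 hn.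
rewrite /P (bigID (fun i : 'I_n => Q i \in B1) (fun i : 'I_n => Q i \in B2)) /=.
apply: lerD.
  rewrite le_eqVlt; apply/orP; left; apply/eqP; apply: eq_bigl => i.
  by case h: (Q i \in B1); rewrite ?andbF ?andbT // (h12 _ h).
rewrite (bigD1 (Ordinal hn)) /=; last by rewrite h2 h1.
rewrite lerDl; apply: sumr_ge0 => i _; exact/ltW/lam_gt0.
Qed.

Lemma P_zero B n : (forall i, Q i \notin B) -> P B n = 0.
Proof. by move=> h; rewrite /P big_pred0 // => i; exact/negbTE. Qed.

End Sums.

Section Main.
Variable R : realType.
Variable Q : nat -> rat.
Variable mu : nat -> nat.
Hypothesis HQ : enum_Qnonneg Q.
Hypothesis Hmu : is_mu Q mu.
Hypothesis HM : propM Q mu.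
Variables k m : nat.
Local Notation a := (@lambda R k).
Local Notation L t := (limn (P R Q k (J m t))).


Lemma idx (t : R) i : t <= m.+1%:R -> Q i \in J m t -> (mu m <= i)%N.
Proof.
move=> ht; rewrite in_setE /J /= => /andP[h1 h2].
apply: (proj2 (Hmu m)); rewrite h1 /=.
by rewrite -(ltr_rat R) ratr_nat (lt_le_trans h2 ht).
Qed.

Lemma L_lt (t : R) : t <= m.+1%:R -> L t < 2 * a (mu m).
Proof.
move=> ht; apply: (@le_lt_trans _ _ (5 * a (mu m) / 3)).
  apply: lim_le => n; have := @P_le_sum R Q k _ _ n (fun i => @idx t i ht).
  have := head_le R k (mu m) n; lra.
have := lam_gt0 R k (mu m); lra.
Qed.

Lemma rat_between (x y : R) : (m%:R <= x) -> x < y ->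
  exists i, x < ratr (Q i) < y.
Proof.
move=> mx /rat_in_itvoo [q]; rewrite in_itv /= => /andP[h1 h2].
have q0 : 0 <= q.
  rewrite -(ler_rat R) rmorph0; apply: le_trans (ltW h1).
  exact: le_trans mx.
have [i Hi] := (proj1 (proj2 HQ q)) q0.
by exists i; rewrite Hi h1 h2.
Qed.

Lemma L_gt (t : R) : m%:R < t -> a (mu m) < L t.
Proof.
move=> mt.
have [i1 /andP[h1 h2]] := @rat_between m%:R t (lexx _) mt.
pose N := (maxn (mu m) i1).+1.
have hj : Q (mu m) = m%:R := proj1 (HM m).
have e1 := @P_extra R Q k set0 [set m%:R] (mu m) N.
have e2 := @P_extra R Q k [set m%:R] (J m t) i1 N.
rewrite P_zero in e1; last by move=> i; apply/negP; rewrite in_setE.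
have i1j : Q i1 != m%:R.
  apply/negP => /eqP e; move: h1; rewrite e ratr_nat; lra.
have := lim_ge R Q k (J m t) N.
have := lam_gt0 R k i1.
have : 0 + a (mu m) <= P R Q k [set m%:R] N.
  apply: e1; first by move=> i; rewrite in_setE.
    by rewrite in_setE.
    by apply/negP; rewrite in_setE.
  by rewrite ltnS leq_maxl.
have : P R Q k [set m%:R] N + a i1 <= P R Q k (J m t) N.
  apply: e2.
  - move=> i; rewrite !in_setE /J /= => ->; rewrite lexx /= ratr_nat //.
  - rewrite in_setE /J /= h2 andbT -(ler_rat R) ratr_nat; exact: ltW.
  - by apply/negP; rewrite in_setE /= => e; move: i1j; rewrite e eqxx.
  - by rewrite ltnS leq_maxr.
lra.
Qed.

Lemma L_strict (t1 t2 : R) : m%:R < t1 -> t1 < t2 -> L t1 < L t2.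
Proof.
move=> m1 t12.
have [i2 /andP[h1 h2]] := @rat_between t1 t2 (ltW m1) t12.
have hsub : forall i, Q i \in J m t1 -> Q i \in J m t2.
  move=> i; rewrite !in_setE /J /= => /andP[-> h] /=; exact: lt_trans t12.
have hin : Q i2 \in J m t2.
  rewrite in_setE /J /= h2 andbT -(ler_rat R) ratr_nat.
  by apply: ltW; apply: lt_trans h1.
have hout : Q i2 \notin J m t1.
  by apply/negP; rewrite in_setE /J /= => /andP[_]; lra.
have : L t1 <= L t2 - a i2.
  apply: lim_le => n.
  have hP : P R Q k (J m t1) n <= P R Q k (J m t1) (maxn n i2.+1).
    by apply: P_nondec; rewrite leq_maxl.
  have := @P_extra R Q k _ _ i2 (maxn n i2.+1) hsub hin hout (leq_maxr _ _).
  have := lim_ge R Q k (J m t2) (maxn n i2.+1).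
  lra.
have := lam_gt0 R k i2; lra.
Qed.

Lemma L_0 : L (0:R) = 0.
Proof.
have h : forall n, P R Q k (J m (0:R)) n = 0.
  move=> n; apply: P_zero => i; apply/negP; rewrite in_setE /J /= => /andP[h1 h2].
  move: h1; rewrite -(ler_rat R) ratr_nat => h1.
  have : (0:R) <= m%:R by [].
  lra.
apply/eqP; rewrite eq_le; apply/andP; split.
  by apply: lim_le => n; rewrite h.
by have := lim_ge R Q k (J m (0:R)) 0; rewrite h.
Qed.

End Main.

Theorem lemma4p9 (R : realType) (Q : nat -> rat) (mu : nat -> nat)
  (HQ : enum_Qnonneg Q) (Hmu : is_mu Q mu) (HM : propM Q mu)
  (Omega : Type) (HOmega : ([set: Omega] #= [set: R])%card)
  (k m : nat) (S : set R) (HS : S `<=` `]m%:R, m.+1%:R[)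
  (r : Omega -> Omega -> R) (Hr : semi_metric S r) (Hrig : strongly_rigid r) :
  (forall x y : Omega, x <> y ->
     lambda k (mu m) < Lambda Q k m r x y < 2 * lambda k (mu m)) /\
  (is_metric (Lambda Q k m r) /\ Met (Lambda Q k m r)) /\
  strongly_rigid (Lambda Q k m r).
Proof.
move: Hr => [r0 [rsym [rz rS]]].
have rin : forall x y, x <> y -> m%:R < r x y < m.+1%:R.
  move=> x y h; have := HS _ (rS x y h).
  by rewrite /= in_itv /=.
have LE : forall x y, Lambda Q k m r x y = limn (P R Q k (J m (r x y))) by [].
have aj := lam_gt0 R k (mu m).
have part1 : forall x y : Omega, x <> y ->
     lambda k (mu m) < Lambda Q k m r x y < 2 * lambda k (mu m).
  move=> x y h; have /andP[h1 h2] := rin x y h; rewrite LE.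
  apply/andP; split; [exact: (L_gt R Q mu HQ HM k m _ h1)|exact: (L_lt R Q mu Hmu k m _ (ltW h2))].
have L0 : forall x, Lambda Q k m r x x = 0.
  by move=> x; rewrite LE (proj2 (rz x x) erefl) L_0.
have Lge0 : forall x y, 0 <= Lambda Q k m r x y.
  move=> x y; case: (pselect (x = y)) => [->|h]; first by rewrite L0.
  have /andP[h1 _] := part1 x y h; lra.
have Lz : forall x y, Lambda Q k m r x y = 0 <-> x = y.
  move=> x y; split; last by move=> ->; rewrite L0.
  move=> e; apply: contrapT => h; have /andP[h1 _] := part1 x y h; lra.
have Lsym : forall x y, Lambda Q k m r x y = Lambda Q k m r y x.
  by move=> x y; rewrite !LE rsym.
have met : is_metric (Lambda Q k m r).
  split; first exact: Lge0.
  split; first exact: Lsym.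
  split; first exact: Lz.
  move=> x y z.
  case: (pselect (x = y)) => [->|hxy]; first by rewrite L0 add0r.
  case: (pselect (y = z)) => [->|hyz]; first by rewrite L0 addr0.
  case: (pselect (x = z)) => [->|hxz].
    by rewrite L0; apply: addr_ge0.
  have /andP[_ h1] := part1 x z hxz.
  have /andP[h2 _] := part1 x y hxy.
  have /andP[h3 _] := part1 y z hyz.
  lra.
split; first exact: part1.
split.
  split; first exact: met.
  split; first exact: met.
  move=> A x Ax; exists (lambda k (mu m)) => // y hy.
  case: (pselect (x = y)) => [<-//|h].
  have /andP[h1 _] := part1 x y h; lra.
move=> x y u v e ne.
have hxy : x <> y by move=> exy; apply: ne; rewrite exy L0.
have huv : u <> v by move=> euv; apply: ne; rewrite e euv L0.
have ruv : r x y = r u v.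
  have /andP[m1 _] := rin x y hxy.
  have /andP[m2 _] := rin u v huv.
  case: (ltgtP (r x y) (r u v)) => // h.
    have := L_strict R Q HQ k m _ _ m1 h; rewrite -!LE e; lra.
  have := L_strict R Q HQ k m _ _ m2 h; rewrite -!LE e; lra.
apply: Hrig => //.
by move=> /rz.
Qed.
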